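(* Let $\Gamma$ be a weakly distance-regular digraph and let $q\ge3$ be an integer with $(1,q-1),(2,q-2)\in\tilde\partial(\Gamma)$. If $p_{(1,q-1),(1,q-1)}^{(2,q-2)}>0$, then every arc of type $(1,q-1)$ is contained in a circuit of length $q$ all of whose arcs are of type $(1,q-1)$.
   Context: Digraphs are finite and simple. $\partial(x,y)$ is the length of a shortest directed path from $x$ to $y$; $\tilde\partial(x,y)=(\partial(x,y),\partial(y,x))$; $\tilde\partial(\Gamma)$ is the set of all values $\tilde\partial(x,y)$; $\Gamma_{\tilde i}=\{(x,y):\tilde\partial(x,y)=\tilde i\}$. A strongly connected digraph $\Gamma$ is weakly distance-regular if $(V\Gamma,\{\Gamma_{\tilde i}\})$ is an association scheme, i.e. for all $\tilde i,\tilde j,\tilde l$ the number $p_{\tilde i,\tilde j}^{\tilde l}=|\{z:\tilde\partial(x,z)=\tilde i,\ \tilde\partial(z,y)=\tilde j\}|$ depends only on $\tilde l=\tilde\partial(x,y)$. An arc $(u,v)$ is of type $(1,r)$ if $\partial(v,u)=r$. A circuit of length $q$ is a closed directed path $(x_0,x_1,\dots,x_{q-1})$ with distinct vertices and arcs $(x_i,x_{i+1})$, indices mod $q$. *)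

(* Defs.v *)
From mathcomp Require Import all_boot.
Set Implicit Arguments. Unset Strict Implicit. Unset Printing Implicit Defensive.

(* A finite simple digraph: vertex set a finType T, arc relation adj,
   loopless (no multiple arcs automatically, since adj is a relation). *)
Definition simple_digraph (T : finType) (adj : rel T) : Prop :=
  irreflexive adj.

Fixpoint reach_in (T : finType) (adj : rel T) (n : nat) (x y : T) : bool :=
  match n with
  | 0 => x == y
  | n'.+1 => [exists z, adj x z && reach_in adj n' z y]
  end.

Definition strongly_connected (T : finType) (adj : rel T) : Prop :=
  forall x y : T, connect adj x y.

(* ∂(x,y): least n with a walk of length n from x to y (shortest walk =
   shortest path); searched among 0..#|T|-1, which suffices when y is
   reachable from x.  Returns #|T| if y is not reachable (never used). *)
Definition dist (T : finType) (adj : rel T) (x y : T) : nat :=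
  find (fun n => reach_in adj n x y) (iota 0 #|T|).

Definition tdist (T : finType) (adj : rel T) (x y : T) : nat * nat :=
  (dist adj x y, dist adj y x).

Definition in_tdist_set (T : finType) (adj : rel T) (i : nat * nat) : Prop :=
  exists x y : T, tdist adj x y = i.

Definition pcount (T : finType) (adj : rel T) (i j : nat * nat) (x y : T) : nat :=
  #|[set z | (tdist adj x z == i) && (tdist adj z y == j)]|.

Definition weakly_distance_regular (T : finType) (adj : rel T) : Prop :=
  simple_digraph adj /\ strongly_connected adj /\
  forall (i j : nat * nat) (x y x' y' : T),
    tdist adj x y = tdist adj x' y' -> pcount adj i j x y = pcount adj i j x' y'.

(* p^l_{i,j}: value of pcount at some (x,y) with ∂~(x,y) = l (0 if none). *)
Definition pnum (T : finType) (adj : rel T) (i j l : nat * nat) : nat :=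
  match [pick xy : T * T | tdist adj xy.1 xy.2 == l] with
  | Some xy => pcount adj i j xy.1 xy.2
  | None => 0
  end.

Definition arc_of_type (T : finType) (adj : rel T) (r : nat) (u v : T) : Prop :=
  adj u v /\ dist adj v u = r.

Definition circuit (T : finType) (adj : rel T) (q : nat) (s : seq T) : Prop :=
  size s = q /\ uniq s /\
  forall (x0 : T) (i : nat), i < q -> adj (nth x0 s i) (nth x0 s ((i.+1) %% q)).

(* Main.v *)
Require Import Defs.
From mathcomp Require Import all_boot.
From mathcomp Require Import zify.
Set Implicit Arguments. Unset Strict Implicit. Unset Printing Implicit Defensive.

Lemma reach_cat (T : finType) (adj : rel T) a b x y z :
  reach_in adj a x y -> reach_in adj b y z -> reach_in adj (a + b) x z.
Proof.
elim: a x => [|a IH] x /=; first by move=> /eqP ->; rewrite add0n.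
case/existsP=> w /andP [xw wy] yz.
apply/existsP; exists w; rewrite xw /=; exact: IH.
Qed.

Lemma reach_path (T : finType) (adj : rel T) p x :
  path adj x p -> reach_in adj (size p) x (last x p).
Proof.
elim: p x => [|y p IH] x /=; first by rewrite eqxx.
case/andP=> xy py; apply/existsP; exists y; rewrite xy; exact: IH.
Qed.

Lemma reach_fun (T : finType) (adj : rel T) n x y :
  reach_in adj n x y -> exists g : nat -> T,
    [/\ g 0 = x, g n = y & forall k, k < n -> adj (g k) (g k.+1)].
Proof.
elim: n x => [|n IH] x /=.
  by move=> /eqP ->; exists (fun _ => y); split.
case/existsP=> z /andP [xz zy]; have [g [g0 gn ga]] := IH _ zy.
exists (fun k => if k is k'.+1 then g k' else x); split => //=.
case=> [|k] /=; first by rewrite g0.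
move=> lt; exact: ga.
Qed.

Lemma reach_walk (T : finType) (adj : rel T) (g : nat -> T) i j :
  (forall k, i <= k -> k < j -> adj (g k) (g k.+1)) -> i <= j ->
  reach_in adj (j - i) (g i) (g j).
Proof.
elim: j => [|j IH] H; first by rewrite leqn0 => /eqP ->; rewrite subnn /= eqxx.
rewrite leq_eqVlt => /orP [/eqP <-|lt]; first by rewrite subnn /= eqxx.
have -> : j.+1 - i = (j - i) + 1 by lia.
apply: (reach_cat (IH _ _)).
- move=> k ik kj; apply: H => //; lia.
- lia.
- rewrite /=; apply/existsP; exists (g j.+1); rewrite eqxx andbT; apply: H; lia.
Qed.

Lemma dist_le (T : finType) (adj : rel T) n x y :
  reach_in adj n x y -> dist adj x y <= n.
Proof.
move=> H; rewrite /dist.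
case: (ltnP n #|T|) => hn.
  rewrite leqNgt; apply/negP => /(before_find 0).
  by rewrite nth_iota // add0n H.
apply: leq_trans hn; rewrite -[X in _ <= X](size_iota 0 #|T|); exact: find_size.
Qed.

Lemma dist_reach (T : finType) (adj : rel T) x y :
  connect adj x y -> reach_in adj (dist adj x y) x y.
Proof.
case/connectP=> p pp ->.
case: (shortenP pp) => p' pp' up' _.
have hs : size p' < #|T|.
  move/card_uniqP: up' => e.
  have := max_card (mem (x :: p')); rewrite e /=; done.
have Hr := reach_path pp'.
have hh : has (fun n => reach_in adj n x (last x p')) (iota 0 #|T|).
  apply/hasP; exists (size p') => //; by rewrite mem_iota.
have := nth_find 0 hh; rewrite /dist.
move: hh; rewrite has_find size_iota => hf.
by rewrite nth_iota // add0n.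
Qed.

Lemma dist_tri (T : finType) (adj : rel T) x y z :
  strongly_connected adj -> dist adj x z <= dist adj x y + dist adj y z.
Proof.
move=> sc; apply: dist_le; apply: reach_cat; exact: dist_reach.
Qed.

Lemma dist_walk (T : finType) (adj : rel T) (g : nat -> T) i j :
  (forall k, i <= k -> k < j -> adj (g k) (g k.+1)) -> i <= j ->
  dist adj (g i) (g j) <= j - i.
Proof. by move=> H ij; apply: dist_le; apply: reach_walk. Qed.

Lemma dist1_adj (T : finType) (adj : rel T) x y :
  strongly_connected adj -> dist adj x y = 1 -> adj x y.
Proof.
move=> sc e; have := dist_reach (sc x y); rewrite e /=.
by case/existsP=> z /andP [xz /eqP <-].
Qed.

Lemma adj_dist1 (T : finType) (adj : rel T) x y :
  irreflexive adj -> adj x y -> dist adj x y = 1.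
Proof.
move=> irr xy; apply/eqP; rewrite eqn_leq; apply/andP; split.
  apply: dist_le => /=; apply/existsP; exists y; by rewrite xy eqxx.
rewrite lt0n; apply/negP => /eqP e0.
have hT : 0 < #|T| by apply/card_gt0P; exists x.
have hh : has (fun n => reach_in adj n x y) (iota 0 #|T|).
  by rewrite has_find size_iota; move: e0; rewrite /dist => ->.
have := nth_find 0 hh; move: e0; rewrite /dist => ->; rewrite nth_iota //=.
move=> /eqP exy; by rewrite exy irr in xy.
Qed.

Definition cinv (T : finType) (adj : rel T) (q : nat) (u v : T) (k : nat) :=
  exists f : nat -> T, [/\ f 0 = u, f 1 = v, f q = f 0,
    (forall i, i < q -> adj (f i) (f i.+1)) &
    (forall i, i < k -> dist adj (f i.+1) (f i) = q - 1)].

Lemma cinv_walk (T : finType) (adj : rel T) q (f : nat -> T) :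
  (forall i, i < q -> adj (f i) (f i.+1)) ->
  forall i k, i <= k -> k <= q -> dist adj (f i) (f k) <= k - i.
Proof.
move=> fa i k ik kq; apply: dist_walk => // l _ lk; apply: fa; exact: leq_trans lk kq.
Qed.

Lemma cinv_step (T : finType) (adj : rel T) q u v j :
  weakly_distance_regular adj -> 3 <= q ->
  (exists x y, tdist adj x y = (2, q - 2) /\ 0 < pcount adj (1, q - 1) (1, q - 1) x y) ->
  1 <= j -> j.+2 <= q -> cinv adj q u v j.+1 -> cinv adj q u v j.+2.
Proof.
move=> [irr [sc H]] q3 [x0 [y0 [e0 p0]]] j1 jq [f [f0 f1 fq fa ft]].
have wk := cinv_walk fa.
have dab : dist adj (f j) (f j.+2) = 2.
  have h1 := ft 0 isT.
  have t1 := dist_tri (f 1) (f j) (f 0) sc.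
  have t2 := dist_tri (f j) (f j.+2) (f 0) sc.
  have w1 := wk 1 j j1 (ltnW (ltnW jq)).
  have w2 := wk j.+2 q jq (leqnn q); rewrite fq in w2.
  have w3 := wk j j.+2 (leq_trans (leqnSn j) (leqnSn j.+1)) jq.
  lia.
have dba : dist adj (f j.+2) (f j) = q - 2.
  have h1 := ft j (leqnn j.+1).
  have t1 := dist_tri (f j.+2) (f 0) (f j) sc.
  have t2 := dist_tri (f j.+1) (f j.+2) (f j) sc.
  have w1 := wk 0 j (leq0n j) (ltnW (ltnW jq)).
  have w2 := wk j.+2 q jq (leqnn q); rewrite fq in w2.
  have w3 := wk j.+1 j.+2 (leqnSn j.+1) jq.
  lia.
have tab : tdist adj (f j) (f j.+2) = (2, q - 2) by rewrite /tdist dab dba.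
have pc : 0 < pcount adj (1, q - 1) (1, q - 1) (f j) (f j.+2).
  by rewrite (H _ _ _ _ x0 y0 (etrans tab (esym e0))).
case/card_gt0P: pc => m; rewrite inE => /andP [/eqP e1 /eqP e2].
move: e1 e2; rewrite /tdist => -[d1 d2] [d3 d4].
exists (fun i => if i == j.+1 then m else f i); split.
- by [].
- have -> : (1 == j.+1) = false by apply/eqP; lia.
  exact: f1.
- have -> : (q == j.+1) = false by apply/eqP; lia.
  by [].
- move=> i iq.
  have ne1 : (j == j.+1) = false by apply/eqP; lia.
  have ne2 : (j.+2 == j.+1) = false by apply/eqP; lia.
  have [->|nij] := eqVneq i j.
    rewrite ?eqxx ?ne1; exact: dist1_adj d1.
  have [->|nij1] := eqVneq i j.+1.
    rewrite ?eqxx ?ne2; exact: dist1_adj d3.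
  rewrite ?eqSS ?(negbTE nij); exact: fa.
- move=> i ilt.
  have ne1 : (j == j.+1) = false by apply/eqP; lia.
  have ne2 : (j.+2 == j.+1) = false by apply/eqP; lia.
  have [->|nij] := eqVneq i j.
    rewrite ?eqxx ?ne1; exact: d2.
  have [->|nij1] := eqVneq i j.+1.
    rewrite ?eqxx ?ne2; exact: d4.
  rewrite ?eqSS ?(negbTE nij); apply: ft; lia.
Qed.

Lemma cinv_base (T : finType) (adj : rel T) q u v :
  weakly_distance_regular adj -> 3 <= q ->
  (exists x y, tdist adj x y = (2, q - 2) /\ 0 < pcount adj (1, q - 1) (1, q - 1) x y) ->
  arc_of_type adj (q - 1) u v -> cinv adj q u v 2.
Proof.
move=> [irr [sc H]] q3 [x0 [y0 [e0 p0]]] [uv dvu].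
have duv := adj_dist1 irr uv.
case/card_gt0P: p0 => z; rewrite inE => /andP [/eqP e1 /eqP e2].
have pc : 0 < pcount adj (1, q - 1) (q - 2, 2) z x0.
  apply/card_gt0P; exists y0; rewrite inE e2 /=.
  move: e0; rewrite /tdist; case=> a b; rewrite a b; by rewrite !eqxx.
have tvu : tdist adj v u = tdist adj z x0.
  move: e1; rewrite /tdist => -[-> ->]; by rewrite dvu duv.
move: pc; rewrite -(H _ _ _ _ _ _ tvu).
case/card_gt0P => w; rewrite inE => /andP [/eqP e3 /eqP e4].
move: e3 e4; rewrite /tdist => -[d1 d2] [d3 d4].
have [g [g0 gq ga]] := reach_fun (dist_reach (sc w u)).
rewrite d3 in gq ga.
exists (fun i => match i with 0 => u | 1 => v | i'.+2 => g i' end); split.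
- by [].
- by [].
- rewrite (_ : q = (q - 2).+2) /=; last lia.
  exact: gq.
- case=> [|[|i]] iq /=.
  + exact: uv.
  + rewrite g0; exact: dist1_adj sc d1.
  + apply: ga; lia.
- case=> [|[|i]] ilt //=.
  by rewrite g0.
Qed.

Theorem lemma2p6 (T : finType) (adj : rel T) (q : nat) :
  weakly_distance_regular adj ->
  3 <= q ->
  in_tdist_set adj (1, q - 1) ->
  in_tdist_set adj (2, q - 2) ->
  0 < pnum adj (1, q - 1) (1, q - 1) (2, q - 2) ->
  forall u v : T, arc_of_type adj (q - 1) u v ->
    exists s : seq T,
      circuit adj q s /\
      (exists2 i, i < q & nth u s i = u /\ nth u s ((i.+1) %% q) = v) /\
      (forall i, i < q ->
         arc_of_type adj (q - 1) (nth u s i) (nth u s ((i.+1) %% q))).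
Proof.
move=> wdr q3 _ _ hp u v arc.
have wit : exists x y, tdist adj x y = (2, q - 2) /\
    0 < pcount adj (1, q - 1) (1, q - 1) x y.
  move: hp; rewrite /pnum; case: pickP => [xy /eqP exy | _] hp; last by [].
  by exists xy.1, xy.2.
have key : forall j, j.+2 <= q -> cinv adj q u v j.+2.
  elim=> [|j IH] hj; first exact: cinv_base.
  apply: (@cinv_step _ _ _ _ _ j.+1) => //.
  exact: IH (ltnW hj).
have E : (q - 2).+2 = q by lia.
have := key (q - 2); rewrite E => /(_ (leqnn q)) [f [f0 f1 fq fa ft]].
have [_ [sc _]] := wdr.
have dvu := ft 0 (ltnW (ltnW q3)).
have wk := cinv_walk fa.
have nthf : forall x0 i, i < q -> nth x0 (mkseq f q) i = f i.
  by move=> x0 i h; rewrite nth_mkseq.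
have nthS : forall x0 i, i < q -> nth x0 (mkseq f q) ((i.+1) %% q) = f i.+1.
  move=> x0 i iq; case: (ltnP i.+1 q) => h.
    by rewrite modn_small // nthf.
  have e : i.+1 = q by lia.
  rewrite e modnn nthf ?fq //; lia.
have inj : forall i k, i < k -> k < q -> f i = f k -> False.
  move=> i k ik kq e.
  case: i ik e => [|i] ik e.
    have w := wk 1 k ik (ltnW kq); rewrite -e in w; lia.
  have t := dist_tri (f 1) (f i.+1) (f 0) sc.
  have w1 := wk 1 i.+1 isT (ltac:(lia)).
  have w2 := wk k q (ltnW kq) (leqnn q); rewrite fq -e in w2.
  lia.
exists (mkseq f q); split; [split; [|split] | split].
- by rewrite size_mkseq.
- rewrite /mkseq map_inj_in_uniq ?iota_uniq // => i k.
  rewrite !mem_iota !add0n => /andP [_ iq] /andP [_ kq] e.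
  case: (ltngtP i k) => // h; exfalso.
  + exact: inj h kq e.
  + exact: inj h iq (esym e).
- move=> x0 i iq; rewrite nthf // nthS //; exact: fa.
- exists 0; first lia.
  by rewrite nthf ?nthS; [split | lia | lia].
- move=> i iq; rewrite nthf // nthS //; split; [exact: fa | exact: ft].
Qed.
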